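(* Let $p$ be an odd prime, $\alpha>1$ an integer with $\gcd(p,\alpha)=1$, $\gamma=\operatorname{ord}_p(\alpha)$, and let $s,t\geq 0$ be integers. Then $$S_p^1(s\gamma p^t)\leq s\,\theta\left(\frac{p+1}{2}\right)^t .$$
   Context: A base-$p$ digit $d\in\{0,\dots,p-1\}$ is called small if $d<p/2$ and large otherwise. Let $\delta=\{\alpha^j \bmod p : j\in\mathbb{Z}\}$ be the set of residues in $\{0,\dots,p-1\}$ generated by $\alpha$ modulo $p$, and $\theta=\#\{x\in\delta: 0\le x<p/2\}$ the number of small residues in $\delta$. For integers $a,n\ge1$, $S_p^n(a)=\#\{0\le s<a : \text{the base-}p\text{ representation of }\alpha^s\text{ contains fewer than } n \text{ large digits}\}$ (this depends on the fixed $\alpha$). *)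

(* Defs.v *)
From mathcomp Require Import all_boot.
Set Implicit Arguments. Unset Strict Implicit. Unset Printing Implicit Defensive.

Definition digit (p n i : nat) : nat := (n %/ p ^ i) %% p.

(* a digit d is large iff d >= p/2, i.e. p <= 2 d *)
Definition large (p d : nat) : bool := p <= d.*2.

(* number of large digits in the base-p representation of n
   (digits of index >= n are all 0 for p >= 2, hence small) *)
Definition nlarge (p n : nat) : nat := \sum_(i < n.+1) large p (digit p n i).

Definition Spn (p alpha n a : nat) : nat :=
  #|[set s : 'I_a | nlarge p (alpha ^ s) < n]|.

(* delta = residues alpha^j mod p; exponents j < p already give all of them
   when gcd(alpha,p)=1 (the order of alpha mod p is at most p-1). *)
Definition delta (p alpha : nat) : {set 'I_p} :=
  [set x : 'I_p | [exists j : 'I_p, val x == alpha ^ j %% p]].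

Definition theta (p alpha : nat) : nat :=
  #|[set x in delta p alpha | ~~ large p (val x)]|.

(* Main.v *)
Require Import Defs.
From mathcomp Require Import all_boot zify.

Lemma modcancel p a x y : coprime p a -> a * x = a * y %[mod p] -> x = y %[mod p].
Proof.
move=> cpa; wlog le: x y / x <= y => [H|].
  case: (leqP x y) => [/H //|/ltnW h e]; symmetry; exact: H h (esym e).
move=> /eqP; rewrite eq_sym eqn_mod_dvd ?leq_mul2l ?le ?orbT // -mulnBr Gauss_dvdr // => h.
by apply/eqP; rewrite eq_sym eqn_mod_dvd.
Qed.

Lemma digit_mod p y z k : y = z %[mod p ^ k.+1] -> digit p y k = digit p z k.
Proof. by rewrite /digit !modn_divl -expnS => ->. Qed.

Lemma pw p e u j : exists k, (1 + u * p ^ e.+1) ^ j = 1 + j * u * p ^ e.+1 + k * p ^ e.+2.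
Proof.
elim: j => [|j [k IH]]; first by exists 0; rewrite expn0 !mul0n.
exists (j * u * u * p ^ e + k + k * u * p ^ e.+1).
rewrite expnSr IH !expnS; set Q := p ^ e. nia.
Qed.

Lemma sumsplit (F : nat -> nat) k N :
  \sum_(0 <= n < k * N) F n = \sum_(0 <= j < k) \sum_(0 <= r < N) F (r + j * N).
Proof.
elim: k => [|k IH]; first by rewrite mul0n !big_geq.
rewrite big_nat_recr //= -IH mulSnr (big_cat_nat _ (leq_addr _ _)) //=.
congr (_ + _); by rewrite -{1}[k * N]add0n big_addn addKn.
Qed.

Lemma sum_card g (P : nat -> bool) :
  \sum_(i < g) (P i : nat) = #|[set i : 'I_g | P i]|.
Proof.
rewrite -sum1_card [RHS]big_mkcond /=; apply eq_bigr => i _; rewrite inE; by case: (P i).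
Qed.

Lemma small_count p : odd p -> \sum_(0 <= i < p) ~~ large p i <= p.+1 %/ 2.
Proof.
move=> op; have hp : p = (p./2).*2.+1 by rewrite -[p in LHS]odd_double_half op.
rewrite (big_cat_nat _ (n := (p./2).+1)) //=; last by rewrite [p in _ <= p]hp ltnS -addnn leq_addr.
rewrite (@eq_big_nat _ _ _ 0 _ _ (fun _ => 1)) => [|i /andP[_ hi]]; last first.
  by rewrite /large; have -> : (p <= i.*2) = false by lia.
rewrite (@eq_big_nat _ _ _ _ p _ (fun _ => 0)) => [|i /andP[hi _]]; last first.
  by rewrite /large; have -> : (p <= i.*2) = true by lia.
rewrite !sum_nat_const_nat subn0 muln1 muln0 addn0 {2}hp.
lia.
Qed.

Lemma cnt p D w : prime p -> odd p -> coprime p w ->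
  \sum_(0 <= j < p) ~~ large p ((D + j * w) %% p) <= p.+1 %/ 2.
Proof.
move=> pp op cw; have p0 : 0 < p := prime_gt0 pp.
pose sg (j : 'I_p) : 'I_p := Ordinal (ltn_pmod (D + j * w) p0).
have sginj : injective sg.
  move=> i j /(congr1 val) /= /eqP; rewrite eqn_modDl => /eqP.
  rewrite ![_ * w]mulnC => /(modcancel _ _ _ _ cw); rewrite !modn_small // => h.
  exact: val_inj.
rewrite big_mkord (eq_bigr (fun j : 'I_p => nat_of_bool (~~ large p (sg j)))) //.
rewrite -(reindex_inj sginj (P := xpredT) (F := fun j : 'I_p => nat_of_bool (~~ large p j))) /=.
by have := small_count _ op; rewrite big_mkord.
Qed.

Definition xx p alpha gamma t := alpha ^ (gamma * p ^ t).
Definition ee p alpha gamma t := logn p (xx p alpha gamma t - 1).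

Fixpoint good p alpha gamma t n : bool :=
  if t is t'.+1 then good p alpha gamma t' n && ~~ large p (digit p (alpha ^ n) (ee p alpha gamma t'))
  else ~~ large p (digit p (alpha ^ n) 0).

Section S.
Variables (p alpha gamma : nat).
Hypotheses (pp : prime p) (a1 : 1 < alpha) (cpa : coprime p alpha) (g0 : 0 < gamma)
  (ag : alpha ^ gamma = 1 %[mod p]).
Local Notation x := (xx p alpha gamma).
Local Notation e := (ee p alpha gamma).

Lemma x_gt1 t : 1 < x t.
Proof.
rewrite /xx; have : 0 < gamma * p ^ t by rewrite muln_gt0 g0 expn_gt0 prime_gt0.
case: (gamma * p ^ t) => // k _; rewrite expnS.
have : 0 < alpha ^ k by rewrite expn_gt0; lia.
nia.
Qed.

Lemma x_fac t : exists2 u, coprime p u & x t = 1 + u * p ^ e t.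
Proof.
have h : 0 < x t - 1 by have := x_gt1 t; lia.
case: (pfactor_coprime pp h) => u cu hu; exists u => //.
rewrite /ee -hu; have := x_gt1 t; lia.
Qed.

Lemma x_mod1 t : x t = 1 %[mod p].
Proof. by rewrite /xx expnM -modnXm ag modnXm exp1n. Qed.

Lemma e_gt0 t : 0 < e t.
Proof.
rewrite /ee logn_gt0 mem_primes pp /=.
have := x_gt1 t => h; rewrite subn_gt0 h /= -eqn_mod_dvd ?x_mod1 //; lia.
Qed.

Lemma e_incr t : e t < e t.+1.
Proof.
case: (x_fac t) => u cu hu.
have := e_gt0 t; case E: (e t) => [//|e'] _.
rewrite E in hu.
case: (pw p e' u p) => k hk.
have hx : x t.+1 = (x t) ^ p by rewrite /xx expnSr mulnA expnM.
have : x t.+1 - 1 = (u + k) * p ^ e'.+2.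
  rewrite hx hu hk !expnS; set Q := p ^ e'; nia.
have hpos : 0 < x t.+1 - 1 by have := x_gt1 t.+1; lia.
move=> h; rewrite /ee -/(x t.+1) -pfactor_dvdn // h dvdn_mull //.
Qed.

Lemma e_mono i t : i < t -> e i < e t.
Proof.
elim: t => // t IH; rewrite ltnS leq_eqVlt => /orP[/eqP ->|/IH h]; first exact: e_incr.
exact: ltn_trans h (e_incr t).
Qed.

Lemma per t m n k : k < e t ->
  digit p (alpha ^ (n + m * (gamma * p ^ t))) k = digit p (alpha ^ n) k.
Proof.
move=> ke; apply: digit_mod.
case: (x_fac t) => u cu hu.
have h1 : x t ^ m = 1 %[mod p ^ e t] by rewrite -modnXm hu addnC modnMDl modnXm exp1n.
have hd : p ^ k.+1 %| p ^ e t by rewrite dvdn_exp2l.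
rewrite expnD [m * _]mulnC expnM -/(xx p alpha gamma t).
have h2 : alpha ^ n * x t ^ m = alpha ^ n %[mod p ^ e t] by rewrite -modnMmr h1 modnMmr muln1.
by rewrite -(modn_dvdm (alpha ^ n * x t ^ m) hd) h2 (modn_dvdm _ hd).
Qed.

Lemma goodper T t m n : t <= T ->
  good p alpha gamma t (n + m * (gamma * p ^ T)) = good p alpha gamma t n.
Proof.
elim: t => [|t IH] ht /=; first by rewrite per // e_gt0.
by rewrite IH ?(ltnW ht) // per // e_mono.
Qed.

Lemma stepdig t r : odd p ->
  \sum_(0 <= j < p) ~~ large p (digit p (alpha ^ (r + j * (gamma * p ^ t))) (e t)) <= p.+1 %/ 2.
Proof.
move=> op; case: (x_fac t) => u cu hu.
have := e_gt0 t; case E: (e t) => [//|e'] _.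
rewrite E in hu.
set a := alpha ^ r; set P := p ^ e'.+1.
have P0 : 0 < P by rewrite expn_gt0 prime_gt0.
have ca : coprime p a by rewrite coprimeXr.
rewrite (eq_bigr (fun j => nat_of_bool (~~ large p ((a %/ P + j * (u * a)) %% p)))).
  by apply: cnt => //; rewrite coprimeMr cu ca.
move=> j _; congr (nat_of_bool (~~ large p _)).
case: (pw p e' u j) => k hk.
have hY : alpha ^ (r + j * (gamma * p ^ t)) = (j * (u * a) + k * a * p) * P + a.
  rewrite expnD [j * _]mulnC expnM -/(xx p alpha gamma t) -/a hu hk -/P expnS -/P; nia.
rewrite /digit hY divnMDl //.
have -> : j * (u * a) + k * a * p + a %/ P = (k * a) * p + (a %/ P + j * (u * a)) by lia.
by rewrite modnMDl.
Qed.

End S.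

Lemma allsmall p y k : prime p -> nlarge p y < 1 -> ~~ large p (digit p y k).
Proof.
move=> pp nl; case: (ltnP k y.+1) => hk.
  move: nl; rewrite /nlarge (bigD1 (Ordinal hk)) //=.
  by case: (large p (digit p y k)).
have hy : y < p ^ k by apply: leq_trans (ltn_expl k (prime_gt1 pp)); lia.
by rewrite /digit divn_small // mod0n /large leqn0 -lt0n prime_gt0.
Qed.

Lemma good_all p alpha gamma t n : prime p -> nlarge p (alpha ^ n) < 1 ->
  good p alpha gamma t n.
Proof.
move=> pp nl; elim: t => [|t IH] /=; first exact: allsmall.
by rewrite IH allsmall.
Qed.

Section T.
Variables (p alpha gamma : nat).
Hypotheses (pp : prime p) (op : odd p) (a1 : 1 < alpha) (cpa : coprime p alpha) (g0 : 0 < gamma)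
  (ag : alpha ^ gamma = 1 %[mod p])
  (hmin : forall j, 0 < j < gamma -> alpha ^ j <> 1 %[mod p]).

Lemma gamma_lt : gamma < p.
Proof.
have h : alpha * alpha ^ p.-1 = alpha * 1 %[mod p].
  by rewrite -expnS prednK ?prime_gt0 // fermat_little // muln1.
have := modcancel _ _ _ _ cpa h => h1.
rewrite ltnNge; apply/negP => hg; apply: (hmin p.-1) => //.
have := prime_gt1 pp; lia.
Qed.

Lemma base : \sum_(0 <= r < gamma * p ^ 0) good p alpha gamma 0 r <= theta p alpha.
Proof.
have p0 := prime_gt0 pp.
rewrite expn0 muln1 big_mkord sum_card.
pose f (i : 'I_gamma) : 'I_p := Ordinal (ltn_pmod (alpha ^ i) p0).
have finj : injective f.
  have key : forall i j : 'I_gamma, i <= j -> f i = f j -> i = j.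
    move=> i j hij /(congr1 val) /= hm; apply: val_inj => /=.
    case: (ltngtP i j) => // hlt; last by exfalso; move: hij; rewrite leqNgt hlt.
    exfalso.
    have e1 : alpha ^ i * 1 = alpha ^ i * alpha ^ (j - i) %[mod p].
      by rewrite muln1 -expnD subnKC // ltnW.
    have := modcancel _ _ _ _ (coprimeXr i cpa) e1 => e2.
    have hb : 0 < j - i < gamma.
      by rewrite subn_gt0 hlt /=; apply: leq_ltn_trans (leq_subr _ _) (ltn_ord j).
    exact: hmin (j - i) hb (esym e2).
  move=> i j h; case: (leqP i j) => hij; first exact: key.
  by symmetry; apply: key (ltnW hij) (esym h).
rewrite -(card_imset _ finj); apply: subset_leq_card; apply/subsetP => y.
move=> /imsetP [i]; rewrite inE => hi ->.
rewrite /theta inE /delta inE; apply/andP; split; last by move: hi; rewrite /= /digit expn0 divn1.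
apply/existsP; exists (Ordinal (ltn_trans (ltn_ord i) gamma_lt)) => /=.
exact: eqxx.
Qed.

Lemma step t : \sum_(0 <= r < gamma * p ^ t.+1) good p alpha gamma t.+1 r <=
  (p.+1 %/ 2) * \sum_(0 <= r < gamma * p ^ t) good p alpha gamma t r.
Proof.
rewrite expnS mulnCA sumsplit.
rewrite (eq_bigr (fun j => \sum_(0 <= r < gamma * p ^ t) (good p alpha gamma t r &&
   ~~ large p (digit p (alpha ^ (r + j * (gamma * p ^ t)))
                 (ee p alpha gamma t))) : nat)); last first.
  move=> j _; apply: eq_bigr => r _ /=; by rewrite goodper.
rewrite exchange_big /= [in X in _ <= X]mulnC big_distrl /=; apply: leq_sum => r _.
case: (good p alpha gamma t r) => /=; first by rewrite mul1n; exact: stepdig.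
by rewrite mul0n big1.
Qed.

Lemma Gbound t : \sum_(0 <= r < gamma * p ^ t) good p alpha gamma t r <= theta p alpha * (p.+1 %/ 2) ^ t.
Proof.
elim: t => [|t IH]; first by apply: leq_trans base _; rewrite expn0 muln1.
apply: leq_trans (step t) _; rewrite expnS mulnCA leq_mul2l IH orbT //.
Qed.

End T.

Theorem lemma2p5 (p alpha gamma s t : nat) :
  prime p -> odd p -> 1 < alpha -> coprime p alpha ->
  (* gamma = ord_p(alpha) *)
  0 < gamma -> alpha ^ gamma = 1 %[mod p] ->
  (forall j, 0 < j < gamma -> alpha ^ j <> 1 %[mod p]) ->
  Spn p alpha 1 (s * gamma * p ^ t) <= s * theta p alpha * (p.+1 %/ 2) ^ t.
Proof.
move=> pp op a1 cpa g0 ag hmin.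
rewrite /Spn -(sum_card _ (fun i => nlarge p (alpha ^ i) < 1)) -mulnA.
apply: (@leq_trans (\sum_(i < s * (gamma * p ^ t)) good p alpha gamma t i)).
  apply: leq_sum => i _; case E: (nlarge _ _ < 1) => //=.
  by rewrite good_all.
rewrite (_ : \sum_(i < _) _ = \sum_(0 <= i < s * (gamma * p ^ t)) good p alpha gamma t i); last by rewrite big_mkord.
rewrite sumsplit.
rewrite (eq_bigr (fun _ => \sum_(0 <= r < gamma * p ^ t) good p alpha gamma t r)) => [|j _]; last first.
  by apply: eq_bigr => r _; rewrite goodper.
rewrite sum_nat_const_nat subn0 -mulnA leq_mul2l; apply/orP; right; exact: Gbound.
Qed.
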